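(* Let $\mathcal{M}\in\mathbb{R}^{N\times N}$ be a column-stochastic matrix ($\mathcal{M}_{i,j}\ge 0$, $\sum_{i=1}^N\mathcal{M}_{i,j}=1$ for every $j$) of an ergodic Markov chain, with eigenvectors $\mathbf{u_1},\ldots,\mathbf{u_N}$ forming a basis of $\mathbb{R}^N$ and eigenvalues $\lambda_1=1$, $|\lambda_j|<1$ for $j>1$, where $\mathbf{u_1}$ is the unique invariant probability vector ($\mathcal{M}\mathbf{u_1}=\mathbf{u_1}$, entries summing to $1$). Let $W=\operatorname{span}\{\mathbf{u_2},\ldots,\mathbf{u_N}\}$; then $1-\mathcal{M}$ maps $W$ bijectively onto $W$, and we write $(1-\mathcal{M})^{-1}$ for the inverse of its restriction to $W$ (equivalently $(1-\mathcal{M})^{-1}\mathbf{y}=\sum_{k=0}^\infty\mathcal{M}^k\mathbf{y}$ for $\mathbf{y}\in W$). Let $m\in\mathbb{R}^{N\times N}$, $m\neq 0$, satisfy $\sum_{i=1}^N m_{i,j}=0$ for all $j$ (so $m\mathbb{R}^N\subseteq W$). Define $\epsilon_+=\max\{\epsilon:\ \mathcal{M}_{i,j}+\epsilon m_{i,j}\geq 0\ \forall i,j\}$, $\epsilon_-=\min\{\epsilon:\ \mathcal{M}_{i,j}+\epsilon m_{i,j}\geq 0\ \forall i,j\}$, and $$\epsilon^*_{max}=\frac{1}{\|m\|_1\,\|(1-\mathcal{M})^{-1}\|^*_1},\qquad \|\mathcal{Q}\|^*_1=\sup_{\mathbf{v}\in W,\ \|\mathbf{v}\|_1=1}\|\mathcal{Q}\mathbf{v}\|_1,$$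 where $\|m\|_1$ is the operator norm induced by the $\ell^1$ norm. Then for every $\epsilon$ with $|\epsilon|<\epsilon^*_{max}$ and $\epsilon\in[\epsilon_-,\epsilon_+]$, the series $$\mathbf{v_1}=\mathbf{u_1}+\sum_{n=1}^\infty\epsilon^n\left((1-\mathcal{M})^{-1}m\right)^n\mathbf{u_1}$$ converges in $\ell^1$, and (assuming, as throughout, that the stochastic matrix $\mathcal{M}+\epsilon m$ has a unique invariant probability vector) $\mathbf{v_1}$ is the invariant measure of $\mathcal{M}+\epsilon m$, i.e. $(\mathcal{M}+\epsilon m)\mathbf{v_1}=\mathbf{v_1}$ with entries summing to $1$. Equivalently $\mathbf{v_1}=(1-\epsilon(1-\mathcal{M})^{-1}m)^{-1}\mathbf{u_1}$.
   Context: Column-vector convention: $\mathcal{M}_{i,j}$ is the probability of a transition from state $j$ to state $i$ in one step; probability vectors are column vectors in $\mathbb{R}^N$. For $\epsilon\in[\epsilon_-,\epsilon_+]$ the matrix $\mathcal{M}+\epsilon m$ is again column-stochastic. *)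

(* Defs.v *)
From HB Require Import structures.
From mathcomp Require Import all_boot all_order all_algebra.
From mathcomp Require Import all_classical all_reals all_analysis.
From mathcomp Require Import complex.
Set Implicit Arguments. Unset Strict Implicit. Unset Printing Implicit Defensive.
Import Order.TTheory GRing.Theory Num.Theory.
Local Open Scope ring_scope.
Local Open Scope classical_set_scope.

Section Defs.
Variable R : realType.

Definition l1norm (k : nat) (v : 'cV[R]_k) : R := \sum_i `|v i 0|.

Definition opnorm1 (k : nat) (A : 'M[R]_k) : R :=
  sup [set r | exists v : 'cV[R]_k, l1norm v = 1 /\ r = l1norm (A *m v)].

(* column-stochastic matrix: M i j = probability of the transition j -> i *)
Definition column_stochastic (k : nat) (M : 'M[R]_k) : Prop :=
  (forall i j, 0 <= M i j) /\ (forall j, \sum_i M i j = 1).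

Definition probvec (k : nat) (v : 'cV[R]_k) : Prop :=
  (forall i, 0 <= v i 0) /\ \sum_i v i 0 = 1.

Definition irreducible (k : nat) (M : 'M[R]_k.+1) : Prop :=
  forall i j, exists t : nat, 0 < (M ^+ t) i j.
Definition aperiodic (k : nat) (M : 'M[R]_k.+1) : Prop :=
  forall i, forall d : nat,
    (forall t : nat, (0 < t)%N -> 0 < (M ^+ t) i i -> (d %| t)%N) -> d = 1%N.
Definition ergodic (k : nat) (M : 'M[R]_k.+1) : Prop :=
  irreducible M /\ aperiodic M.

Definition mxC (p q : nat) (A : 'M[R]_(p, q)) : 'M[R[i]]_(p, q) :=
  map_mx (fun x => (x%:C)%C) A.

Definition eigenbasis (k : nat) (M : 'M[R]_k) (U : 'M[R[i]]_k)
    (lam : 'rV[R[i]]_k) : Prop :=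
  U \in unitmx /\ mxC M *m U = U *m diag_mx lam.

(* W = span{u_2,...,u_N} (inside R^N): the real vectors which are
   combinations of the columns 2..N of U *)
Definition Wspan (k : nat) (U : 'M[R[i]]_k.+1) : set 'cV[R]_k.+1 :=
  [set v | exists c : 'cV[R[i]]_k.+1, c ord0 0 = 0 /\ mxC v = U *m c].

(* (1 - M)^{-1} : inverse of the restriction of 1 - M to W *)
Definition resW (k : nat) (M : 'M[R]_k.+1) (U : 'M[R[i]]_k.+1)
    (y : 'cV[R]_k.+1) : 'cV[R]_k.+1 :=
  xget 0 [set x | Wspan U x /\ (1%:M - M) *m x = y].

Definition normW (k : nat) (U : 'M[R[i]]_k.+1)
    (Q : 'cV[R]_k.+1 -> 'cV[R]_k.+1) : R :=
  sup [set r | exists v, Wspan U v /\ l1norm v = 1 /\ r = l1norm (Q v)].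

Definition admissible_eps (k : nat) (M m : 'M[R]_k) : set R :=
  [set e | forall i j, 0 <= M i j + e * m i j].
Definition eps_plus (k : nat) (M m : 'M[R]_k) : R := sup (admissible_eps M m).
Definition eps_minus (k : nat) (M m : 'M[R]_k) : R := inf (admissible_eps M m).

Definition eps_star (k : nat) (M : 'M[R]_k.+1) (U : 'M[R[i]]_k.+1)
    (m : 'M[R]_k.+1) : R :=
  1 / (opnorm1 m * normW U (resW M U)).

Definition Qop (k : nat) (M : 'M[R]_k.+1) (U : 'M[R[i]]_k.+1)
    (m : 'M[R]_k.+1) (v : 'cV[R]_k.+1) : 'cV[R]_k.+1 :=
  resW M U (m *m v).

Definition pert_partial (k : nat) (M : 'M[R]_k.+1) (U : 'M[R[i]]_k.+1)
    (m : 'M[R]_k.+1) (eps : R) (u1 : 'cV[R]_k.+1) (K : nat) : 'cV[R]_k.+1 :=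
  \sum_(t < K) eps ^+ t *: iter t (Qop M U m) u1.

End Defs.

(* Main.v *)
Require Import Defs.
From HB Require Import structures.
From mathcomp Require Import all_boot all_order all_algebra.
From mathcomp Require Import all_classical all_reals all_analysis.
From mathcomp Require Import complex.
From mathcomp Require Import lra.
Import Order.TTheory GRing.Theory Num.Theory.
Local Open Scope ring_scope.
Local Open Scope classical_set_scope.

Lemma l1norm_ge0 {R : realType} {k : nat} (v : 'cV[R]_k) : 0 <= l1norm v.
Proof. by rewrite /l1norm; apply: sumr_ge0 => i _. Qed.

Lemma l1norm_eq0 {R : realType} {k : nat} (v : 'cV[R]_k) : l1norm v = 0 -> v = 0.
Proof.
move=> H; apply/matrixP => i j; rewrite (ord1 j) mxE.
have := @psumr_eq0P _ _ xpredT (fun i => `|v i 0|) (fun i _ => normr_ge0 (v i 0)) H i isT.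
by move/eqP; rewrite normr_eq0 => /eqP.
Qed.

Lemma l1normD {R : realType} {k : nat} (u v : 'cV[R]_k) :
  l1norm (u + v) <= l1norm u + l1norm v.
Proof.
rewrite /l1norm -big_split /=; apply: ler_sum => i _; rewrite mxE; exact: ler_normD.
Qed.

Lemma l1normZ {R : realType} {k : nat} (a : R) (v : 'cV[R]_k) :
  l1norm (a *: v) = `|a| * l1norm v.
Proof.
rewrite /l1norm mulr_sumr; apply: eq_bigr => i _; by rewrite mxE normrM.
Qed.

Lemma l1normN {R : realType} {k : nat} (v : 'cV[R]_k) : l1norm (- v) = l1norm v.
Proof. by rewrite -scaleN1r l1normZ normrN normr1 mul1r. Qed.

Lemma l1norm_bound {R : realType} {k : nat} (A : 'M[R]_k) :
  exists C, 0 <= C /\ forall v, l1norm (A *m v) <= C * l1norm v.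
Proof.
exists (\sum_i \sum_j `|A i j|); split.
  by apply: sumr_ge0 => i _; apply: sumr_ge0.
move=> v; rewrite /l1norm mulr_sumr.
apply: (@le_trans _ _ (\sum_i \sum_j `|A i j| * `|v j 0|)).
  apply: ler_sum => i _; rewrite mxE; apply: le_trans (ler_norm_sum _ _ _) _.
  by apply: ler_sum => j _; rewrite normrM.
rewrite exchange_big /=; apply: ler_sum => j _; rewrite -mulr_suml.
apply: ler_wpM2r => //; apply: ler_sum => i _.
rewrite (bigD1 j) //=; set S := (X in _ + X); have : 0 <= S by apply: sumr_ge0.
by move=> ?; rewrite lerDl.
Qed.

Lemma l1norm0 {R : realType} {k : nat} : l1norm (0 : 'cV[R]_k) = 0.
Proof. by rewrite /l1norm big1 // => i _; rewrite mxE normr0. Qed.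

Lemma l1norm_normalize {R : realType} {k : nat} {v : 'cV[R]_k} :
  v != 0 -> 0 < l1norm v /\ l1norm ((l1norm v)^-1 *: v) = 1.
Proof.
move=> nz; have s0 : 0 < l1norm v.
  rewrite lt_def l1norm_ge0 andbT; apply/eqP => /l1norm_eq0 h; by rewrite h eqxx in nz.
split => //; rewrite l1normZ ger0_norm ?invr_ge0 ?ltW // mulVf //; exact: lt0r_neq0.
Qed.

Lemma opnorm1_bound {R : realType} {k : nat} (A : 'M[R]_k) v :
  l1norm (A *m v) <= opnorm1 A * l1norm v.
Proof.
have [C [C0 HC]] := l1norm_bound A.
have hub : has_ubound [set r | exists v : 'cV_k, l1norm v = 1 /\ r = l1norm (A *m v)].
  by exists C => r [w [w1 ->]]; have := HC w; rewrite w1 mulr1.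
have [->|nz] := eqVneq v 0; first by rewrite mulmx0 !l1norm0 mulr0.
have [s0 s1] := l1norm_normalize nz.
have := ub_le_sup hub (ex_intro _ ((l1norm v)^-1 *: v) (conj s1 erefl)).
have e : `|(l1norm v)^-1| = (l1norm v)^-1 by rewrite ger0_norm // invr_ge0 ltW.
rewrite -scalemxAr l1normZ e mulrC.
by rewrite ler_pdivrMr // mulrC.
Qed.

Lemma normW_bound {R : realType} {k : nat} (U : 'M[R[i]]_k.+1)
    (Q : 'cV[R]_k.+1 -> 'cV[R]_k.+1) (P : 'M[R]_k.+1) :
  (forall y, Wspan U y -> Q y = P *m y) ->
  (forall y a, Wspan U y -> Wspan U (a *: y)) ->
  forall y, Wspan U y -> l1norm (Q y) <= normW U Q * l1norm y.
Proof.
move=> HQ HW y Wy.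
have [C [C0 HC]] := l1norm_bound P.
have hub : has_ubound [set r | exists v, Wspan U v /\ l1norm v = 1 /\ r = l1norm (Q v)].
  by exists C => r [w [Ww [w1 ->]]]; have := HC w; rewrite w1 mulr1 HQ.
have [->|nz] := eqVneq y 0.
  by rewrite !HQ ?mulmx0 ?l1norm0 ?mulr0 //; move: Wy; rewrite -(scale0r y) => /(HW _ 0).
have [s0 s1] := l1norm_normalize nz.
have := ub_le_sup hub (ex_intro _ ((l1norm y)^-1 *: y) (conj (HW _ _ Wy) (conj s1 erefl))).
rewrite HQ; last exact: HW.
have e : `|(l1norm y)^-1| = (l1norm y)^-1 by rewrite ger0_norm // invr_ge0 ltW.
rewrite -scalemxAr l1normZ e mulrC.
by rewrite ler_pdivrMr // mulrC HQ.
Qed.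

Lemma inj_unitmx {F : fieldType} {k : nat} (A : 'M[F]_k) :
  (forall x : 'cV_k, A *m x = 0 -> x = 0) -> A \in unitmx.
Proof.
move=> H; rewrite -row_full_unit -cokermx_eq0; apply/eqP/matrixP => i j.
have := H (cokermx A *m delta_mx j 0).
rewrite mulmxA mulmx_coker mul0mx => /(_ erefl) /matrixP /(_ i 0).
by rewrite -colE !mxE.
Qed.

Lemma sum_mulmx {T : pzRingType} {k : nat} (B : 'M[T]_k) (x : 'cV[T]_k) :
  \sum_i (B *m x) i 0 = \sum_j (\sum_i B i j) * x j 0.
Proof.
under eq_bigr do rewrite mxE.
rewrite exchange_big /=; apply: eq_bigr => j _; by rewrite mulr_suml.
Qed.

Lemma mxCE {R : realType} {p q : nat} (A : 'M[R]_(p, q)) :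
  mxC A = map_mx (real_complex R) A.
Proof. by []. Qed.

Lemma sum_mxC {R : realType} {k : nat} (x : 'cV[R]_k) :
  \sum_i (mxC x) i 0 = (\sum_i x i 0)%:C%C.
Proof. by rewrite rmorph_sum; apply: eq_bigr => i _; rewrite mxE. Qed.

Lemma sumU {R : realType} {n : nat} (M : 'M[R]_n.+1) (U : 'M[R[i]]_n.+1)
    (lam : 'rV[R[i]]_n.+1) (u1 : 'cV[R]_n.+1) :
  column_stochastic M -> eigenbasis M U lam ->
  (forall j : 'I_n.+1, j != ord0 -> `|lam ord0 j| < 1) ->
  col ord0 U = mxC u1 -> \sum_i u1 i 0 = 1 ->
  forall j, \sum_i U i j = (j == ord0)%:R.
Proof.
move=> [_ cs] [_ E] hl hc hs j.
have key : \sum_i U i j * lam ord0 j = \sum_i U i j.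
  transitivity (\sum_i0 (U *m diag_mx lam) i0 j).
    by rewrite mul_mx_diag; apply: eq_bigr => i0 _; rewrite mxE.
  rewrite -E; under eq_bigr do rewrite mxE.
  rewrite exchange_big /=; apply: eq_bigr => l _.
  under eq_bigr do rewrite mxE.
  by rewrite -mulr_suml -rmorph_sum cs rmorph1 mul1r.
have [->|nz] := eqVneq j ord0.
  transitivity (\sum_i (col ord0 U) i 0).
    by apply: eq_bigr => i _; rewrite mxE.
  by rewrite hc sum_mxC hs rmorph1.
rewrite /= ; apply/eqP; move/eqP: key.
rewrite -mulr_suml -subr_eq0 -{2}(mulr1 (\sum_i U i j)) -mulrBr mulf_eq0 subr_eq0.
case/orP => // /eqP hlam; have := hl j nz; by rewrite hlam normr1 ltxx.
Qed.

Lemma sumUc {R : realType} {n : nat} {U : 'M[R[i]]_n.+1} :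
  (forall j, \sum_i U i j = (j == ord0)%:R) ->
  forall c : 'cV[R[i]]_n.+1, \sum_i (U *m c) i 0 = c ord0 0.
Proof.
move=> hU c; rewrite sum_mulmx (bigD1 ord0) //= [X in _ + X]big1.
  by rewrite hU eqxx mul1r addr0.
by move=> j nj; rewrite hU (negbTE nj) mul0r.
Qed.

Lemma W_iff {R : realType} {n : nat} (U : 'M[R[i]]_n.+1) :
  U \in unitmx ->
  (forall j, \sum_i U i j = (j == ord0)%:R) ->
  forall v, Wspan U v <-> \sum_i v i 0 = 0.
Proof.
move=> Uu hU v; split.
  move=> [c [c0 e]]; have := sumUc hU c; rewrite -e sum_mxC c0.
  by rewrite -(rmorph0 (real_complex R)) => /complexI.
move=> s0; exists (invmx U *m mxC v); split => //.
rewrite -(sumUc hU) mulKVmx // sum_mxC s0 rmorph0. reflexivity.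
by rewrite mulKVmx.
Qed.

Lemma kerW {R : realType} {n : nat} (M : 'M[R]_n.+1) (U : 'M[R[i]]_n.+1)
    (lam : 'rV[R[i]]_n.+1) :
  eigenbasis M U lam ->
  (forall j : 'I_n.+1, j != ord0 -> `|lam ord0 j| < 1) ->
  forall x, Wspan U x -> (1%:M - M) *m x = 0 -> x = 0.
Proof.
move=> [Uu E] hl x [c [c0 e]] hx.
have h1 : U *m (c - diag_mx lam *m c) = 0.
  have hx' : x - M *m x = 0 by rewrite -hx mulmxBl mul1mx.
  rewrite mulmxBr mulmxA -E -mulmxA -e.
  by rewrite !mxCE -map_mxM -map_mxB hx' map_mx0.
have h2 : c - diag_mx lam *m c = 0 by rewrite -(mulKmx Uu (_ - _)) h1 mulmx0.
have hc : c = 0.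
  apply/matrixP => j l; rewrite (ord1 l) mxE.
  have [->|nj] := eqVneq j ord0; first by [].
  move/matrixP: h2 => /(_ j 0); rewrite mul_diag_mx !mxE.
  rewrite -{1}(mul1r (c j 0)) -mulrBl => /eqP; rewrite mulf_eq0 subr_eq0.
  case/orP => [/eqP hlam|/eqP //]; have := hl j nj; by rewrite -hlam normr1 ltxx.
apply/matrixP => i0 l; move/matrixP: e => /(_ i0 l); rewrite hc mulmx0 !mxE.
by rewrite -(rmorph0 (real_complex R)) => /complexI.
Qed.

Theorem mainTheorem2 (R : realType) (n : nat)
    (M : 'M[R]_n.+1) (U : 'M[R[i]]_n.+1) (lam : 'rV[R[i]]_n.+1)
    (u1 : 'cV[R]_n.+1) (m : 'M[R]_n.+1) (eps : R) :
  column_stochastic M ->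
  ergodic M ->
  eigenbasis M U lam ->
  lam ord0 ord0 = 1 ->
  (forall j : 'I_n.+1, j != ord0 -> `|lam ord0 j| < 1) ->
  col ord0 U = mxC u1 ->
  probvec u1 -> M *m u1 = u1 ->
  (forall p, probvec p -> M *m p = p -> p = u1) ->
  m != 0 ->
  (forall j, \sum_i m i j = 0) ->
  `|eps| < eps_star M U m ->
  eps_minus M m <= eps <= eps_plus M m ->
  (exists! p, probvec p /\ (M + eps *: m) *m p = p) ->
  exists v1 : 'cV[R]_n.+1,
    (fun K => l1norm (pert_partial M U m eps u1 K - v1)) @ \oo --> 0
    /\ (M + eps *: m) *m v1 = v1
    /\ \sum_i v1 i 0 = 1
    /\ v1 - eps *: Qop M U m v1 = u1
    /\ (forall x, x - eps *: Qop M U m x = u1 -> x = v1).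
Proof.
move=> hM _ heig hl0 hl hc [u1ge hs] Mu1 _ _ hm hEps _ _.
have hU := @sumU _ _ M U lam u1 hM heig hl hc hs.
have Uu := heig.1.
have Wi := W_iff U Uu hU.
have sumM : forall x : 'cV[R]_n.+1, \sum_i (M *m x) i 0 = \sum_i x i 0.
  by move=> x; rewrite sum_mulmx; apply: eq_bigr => j _; rewrite hM.2 mul1r.
have summ : forall x : 'cV[R]_n.+1, \sum_i (m *m x) i 0 = 0.
  by move=> x; rewrite sum_mulmx big1 // => j _; rewrite hm mul0r.
have sumD : forall x y : 'cV[R]_n.+1, \sum_i (x + y) i 0 = \sum_i x i 0 + \sum_i y i 0.
  by move=> x y; rewrite -big_split; apply: eq_bigr => i _; rewrite mxE.
have sumN : forall x : 'cV[R]_n.+1, \sum_i (- x) i 0 = - \sum_i x i 0.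
  by move=> x; rewrite -sumrN; apply: eq_bigr => i _; rewrite mxE.
have sumZ : forall (a : R) (x : 'cV[R]_n.+1), \sum_i (a *: x) i 0 = a * \sum_i x i 0.
  by move=> a x; rewrite mulr_sumr; apply: eq_bigr => i _; rewrite mxE.
set A : 'M[R]_n.+1 := 1%:M - M + u1 *m const_mx 1.
have Ax : forall x : 'cV[R]_n.+1, A *m x = x - M *m x + (\sum_i x i 0) *: u1.
  move=> x; rewrite /A mulmxDl mulmxBl mul1mx -mulmxA.
  have -> : const_mx 1 *m x = (\sum_i x i 0)%:M :> 'M[R]_1.
    apply/matrixP => a b; rewrite (ord1 a) (ord1 b) !mxE /= mulr1n.
    by apply: eq_bigr => i _; rewrite mxE mul1r.
  by rewrite mul_mx_scalar.
have sumA : forall x : 'cV[R]_n.+1, \sum_i (A *m x) i 0 = \sum_i x i 0.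
  by move=> x; rewrite Ax sumD sumD sumN sumM subrr add0r sumZ hs mulr1.
have Ainj : forall x : 'cV[R]_n.+1, A *m x = 0 -> x = 0.
  move=> x h; have s0 : \sum_i x i 0 = 0.
    by rewrite -sumA h big1 // => i _; rewrite mxE.
  apply: (@kerW _ _ M U lam heig hl); first by apply/Wi.
  by move: h; rewrite Ax s0 scale0r addr0 mulmxBl mul1mx.
have Au := inj_unitmx A Ainj.
set P := invmx A.
have resWE : forall y : 'cV[R]_n.+1, \sum_i y i 0 = 0 -> resW M U y = P *m y.
  move=> y y0; apply: xget_unique.
    have s0 : \sum_i (P *m y) i 0 = 0 by rewrite -sumA mulKVmx.
    split; first by apply/Wi.
    have e := mulKVmx Au y; rewrite Ax s0 scale0r addr0 in e.
    by rewrite mulmxBl mul1mx; exact: e.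
  move=> x [/Wi x0 hx]; rewrite -(mulKmx Au x); congr (_ *m _).
  by rewrite Ax x0 scale0r addr0 -hx mulmxBl mul1mx.
set B := P *m m.
have QE : forall v : 'cV[R]_n.+1, Qop M U m v = B *m v.
  by move=> v; rewrite /Qop resWE ?summ // mulmxA.
have nWb := normW_bound U (resW M U) P (fun y Wy => resWE y (proj1 (Wi y) Wy))
  (fun y a Wy => proj2 (Wi _) (eq_trans (sumZ a y) (eq_trans (congr1 _ (proj1 (Wi y) Wy)) (mulr0 a)))).
set p := opnorm1 m * normW U (resW M U).
have p0 : 0 < p.
  rewrite ltNge; apply/negP => hp.
  move: hEps; rewrite /eps_star -/p mul1r => h.
  have := le_lt_trans (normr_ge0 eps) h; by rewrite invr_gt0 ltNge hp.
have op0 : 0 <= opnorm1 m.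
  have nz : (const_mx 1 : 'cV[R]_n.+1) != 0.
    by apply/eqP => /matrixP /(_ ord0 0); rewrite !mxE => /eqP; rewrite oner_eq0.
  have [l0 _] := l1norm_normalize nz.
  have := le_trans (l1norm_ge0 _) (opnorm1_bound m (const_mx 1)).
  by rewrite pmulr_lge0.
have nW0 : 0 <= normW U (resW M U).
  rewrite leNgt; apply/negP => h.
  have : p <= 0 by rewrite /p mulr_ge0_le0 // ltW.
  by rewrite leNgt p0.
have Bb : forall v : 'cV[R]_n.+1, l1norm (B *m v) <= p * l1norm v.
  move=> v; rewrite /B -mulmxA -resWE ?summ //.
  apply: le_trans (nWb _ _) _; first by apply/Wi; rewrite summ.
  by rewrite /p -mulrA mulrCA ler_wpM2l // opnorm1_bound.
set q := `|eps| * p.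
have q0 : 0 <= q by rewrite /q; apply: mulr_ge0 => //; exact: ltW.
have q1 : q < 1.
  by move: hEps; rewrite /eps_star -/p ltr_pdivlMr.
set T := eps *: B.
have Tb : forall v : 'cV[R]_n.+1, l1norm (T *m v) <= q * l1norm v.
  by move=> v; rewrite /T -scalemxAl l1normZ /q -mulrA ler_wpM2l.
have Tpow : forall K (v : 'cV[R]_n.+1), l1norm (T ^+ K *m v) <= q ^+ K * l1norm v.
  elim => [|K IH] v; first by rewrite expr0 mul1r mul1mx.
  have -> : T ^+ K.+1 = T *m T ^+ K by rewrite exprS.
  rewrite -mulmxA; apply: le_trans (Tb _) _.
  by rewrite exprS -mulrA ler_wpM2l.
have Iinj : forall x : 'cV[R]_n.+1, (1%:M - T) *m x = 0 -> x = 0.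
  move=> x h; have ex : x = T *m x.
    by move: h; rewrite mulmxBl mul1mx => /eqP; rewrite subr_eq0 => /eqP.
  have := Tb x; rewrite -ex => h2.
  have : (1 - q) * l1norm x <= 0 by rewrite mulrBl mul1r subr_le0.
  rewrite pmulr_rle0 ?subr_gt0 // => h3.
  by apply: l1norm_eq0; apply/eqP; rewrite eq_le h3 l1norm_ge0.
have Iu := inj_unitmx _ Iinj.
set v1 := invmx (1%:M - T) *m u1.
have hv1 : v1 - T *m v1 = u1.
  by have := mulKVmx Iu u1; rewrite mulmxBl mul1mx.
clearbody v1.
have TB : forall v : 'cV[R]_n.+1, T *m v = eps *: (B *m v).
  by move=> v; rewrite /T -scalemxAl.
have iterE : forall t, iter t (Qop M U m) u1 = B ^+ t *m u1.
  elim => [|t IH] /=; first by rewrite expr0 mul1mx.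
  have -> : B ^+ t.+1 = B *m B ^+ t by rewrite exprS.
  by rewrite IH QE mulmxA.
have PS : forall K, pert_partial M U m eps u1 K = v1 - T ^+ K *m v1.
  elim => [|K IH]; first by rewrite /pert_partial big_ord0 expr0 mul1mx subrr.
  rewrite /pert_partial big_ord_recr /= -/(pert_partial M U m eps u1 K) IH.
  rewrite iterE scalemxAl -exprZn -/T -hv1 mulmxBr mulmxA.
  have -> : T ^+ K *m T = T ^+ K.+1 by rewrite exprSr.
  by rewrite addrA subrK.
exists v1; split.
  apply: (@squeeze_cvgr _ _ _ _ (fun _ => 0) (fun K => l1norm v1 * q ^+ K)).
  - apply: nearW => K; rewrite PS addrAC subrr add0r l1normN l1norm_ge0 /=.
    by rewrite mulrC Tpow.
  - exact: (@cvg_cst (numFieldTopology.RealField_sort__canonical__topology_structure_Topological (reals_Real__to__Num_RealField R))).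
  - rewrite -(mulr0 (l1norm v1)); apply: cvgMr; apply: cvg_expr.
    by rewrite ger0_norm.
have e1 : v1 - eps *: (B *m v1) = u1 by rewrite -TB.
have Au1 : A *m u1 = u1 by rewrite Ax Mu1 hs scale1r subrr add0r.
have e2 : A *m v1 - eps *: (m *m v1) = u1.
  by rewrite -Au1 -e1 mulmxBr -scalemxAr /B /P !mulmxA mulmxV // mul1mx.
have s1 : \sum_i v1 i 0 = 1.
  by have := congr1 (fun x : 'cV[R]_n.+1 => \sum_i x i 0) e2; rewrite /= sumD sumN sumZ summ mulr0 subr0 sumA hs.
split.
  rewrite Ax s1 scale1r in e2.
  apply/matrixP => a b; move/matrixP: e2 => /(_ a b).
  rewrite mulmxDl -scalemxAl !mxE => h; lra.
split => //; split; first by rewrite QE.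
move=> x; rewrite QE -TB => hx.
apply/eqP; rewrite -subr_eq0; apply/eqP/Iinj.
by rewrite mulmxBr mulmxBl mul1mx hx mulmxBl mul1mx hv1 subrr.
Qed.
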